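(* Let $n,d\ge1$, $p>d$, $\Delta\in\mathbb{R}^{nd\times nd}$ symmetric with $d\times d$ blocks, $\Delta_{ii}=0$, $Z^{\top}=[I_d,\dots,I_d]$, $A=ZZ^{\top}+\Delta$, $f(S)=\langle A,SS^{\top}\rangle$, $\delta>0$. Suppose $S$ is a second-order critical point of $f$ with $d_F(S,Z)\le\delta\sqrt{d/n}\,\|\Delta\|_{\mathrm{op}}$. Then for every $1\le i\le n$, \[ \lambda_{\min}(\Lambda_{ii})\ge n-\frac{\delta^2d\|\Delta\|_{\mathrm{op}}^2}{2n}-\max_{1\le k\le n}\Big\|\sum_{j\ne k}\Delta_{kj}S_j\Big\|_{\mathrm{op}}, \] and \[ \max_{1\le i\le n}\Big\|\sum_{j\ne i}\Delta_{ij}S_j\Big\|_{\mathrm{op}}\le\delta\sqrt{\frac dn}\,\|\Delta\|_{\mathrm{op}}\max_{1\le i\le n}\|\Delta_i\|_{\mathrm{op}}+\max_{1\le i\le n}\|\Delta_i^{\top}Z\|_{\mathrm{op}}. \]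
   Context: $S\in\mathbb{R}^{nd\times p}$ has $d\times p$ blocks $S_i$ with $S_iS_i^{\top}=I_d$; $A_{ij}=I_d+\Delta_{ij}$; $\Delta_i^{\top}=[\Delta_{i1},\dots,\Delta_{in}]$ is the $i$-th block row of $\Delta$ ($\Delta_i$ the $i$-th block column), and $\Delta_i^{\top}Z=\sum_j\Delta_{ij}$. $\Lambda_{ii}=\frac12\sum_j(S_iS_j^{\top}A_{ji}+A_{ij}S_jS_i^{\top})$; $T_{S_i}=\{Y\in\mathbb{R}^{d\times p}:S_iY^{\top}+YS_i^{\top}=0\}$. $S$ is a second-order critical point if $\sum_jA_{ij}S_j=\Lambda_{ii}S_i$ for all $i$ and $\sum_i\langle\Lambda_{ii},\dot S_i\dot S_i^{\top}\rangle\ge\sum_{i,j}\langle A_{ij},\dot S_i\dot S_j^{\top}\rangle$ for all $\dot S_i\in T_{S_i}$. $d_F(S,Z)=\min\{(\sum_i\|S_i-Q\|_F^2)^{1/2}:QQ^{\top}=I_d,Q\in\mathbb{R}^{d\times p}\}$. *)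

(* Defs.v *)
From HB Require Import structures.
From mathcomp Require Import all_boot all_order all_algebra.
From mathcomp Require Import classical_sets reals.
Set Implicit Arguments. Unset Strict Implicit. Unset Printing Implicit Defensive.
Import Order.TTheory GRing.Theory Num.Theory.
Local Open Scope classical_set_scope.
Local Open Scope ring_scope.

Section Defs.
Variable R : realType.

Definition vnorm k (x : 'cV[R]_k) : R := Num.sqrt (\sum_(i < k) x i 0 ^+ 2).

Definition opnorm m k (M : 'M[R]_(m, k)) : R :=
  sup [set vnorm (M *m x) | x in [set x : 'cV[R]_k | vnorm x = 1]].

Definition fnorm m k (M : 'M[R]_(m, k)) : R :=
  Num.sqrt (\sum_(i < m) \sum_(j < k) M i j ^+ 2).

Definition frob m k (X Y : 'M[R]_(m, k)) : R := \tr (X^T *m Y).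

(* d_F(S, Z) = min over Q with Q Q^T = I_d of (sum_i ||S_i - Q||_F^2)^(1/2) *)
Definition dF n d p (S : 'I_n -> 'M[R]_(d, p)) : R :=
  inf [set Num.sqrt (\sum_(i < n) fnorm (S i - Q) ^+ 2)
      | Q in [set Q : 'M[R]_(d, p) | Q *m Q^T = 1%:M]].

(* blocks of A = Z Z^T + Delta : A_ij = I_d + Delta_ij *)
Definition Ablk n d (Delta : 'I_n -> 'I_n -> 'M[R]_d) (i j : 'I_n) : 'M[R]_d :=
  1%:M + Delta i j.

Definition Lambda n d p (Delta : 'I_n -> 'I_n -> 'M[R]_d)
    (S : 'I_n -> 'M[R]_(d, p)) (i : 'I_n) : 'M[R]_d :=
  (2%:R)^-1 *: \sum_(j < n) (S i *m (S j)^T *m Ablk Delta j i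
                             + Ablk Delta i j *m S j *m (S i)^T).

Definition tangent d p (Si Y : 'M[R]_(d, p)) : Prop :=
  Si *m Y^T + Y *m Si^T = 0.

(* S (with S_i S_i^T = I_d) is a second-order critical point of f(S) = <A, S S^T> *)
Definition second_order_critical n d p (Delta : 'I_n -> 'I_n -> 'M[R]_d)
    (S : 'I_n -> 'M[R]_(d, p)) : Prop :=
  (forall i, S i *m (S i)^T = 1%:M) /\
  (forall i, \sum_(j < n) Ablk Delta i j *m S j = Lambda Delta S i *m S i) /\
  (forall Sdot : 'I_n -> 'M[R]_(d, p), (forall i, tangent (S i) (Sdot i)) ->
     \sum_(i < n) frob (Lambda Delta S i) (Sdot i *m (Sdot i)^T)
     >= \sum_(i < n) \sum_(j < n) frob (Ablk Delta i j) (Sdot i *m (Sdot j)^T)).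

Definition bigDelta n d (Delta : 'I_n -> 'I_n -> 'M[R]_d) :=
  \mxblock_(i < n, j < n) Delta i j.

Definition blockcol n d (Delta : 'I_n -> 'I_n -> 'M[R]_d) (i : 'I_n) :=
  \mxcol_(j < n) Delta j i.

End Defs.

(* Main.v *)
Require Import Defs.
From HB Require Import structures.
From mathcomp Require Import all_boot all_order all_algebra.
From mathcomp Require Import classical_sets reals.
From mathcomp Require Import ring lra.
From Stdlib Require Classical_Prop.
Import Order.TTheory GRing.Theory Num.Theory.
Set Implicit Arguments. Unset Strict Implicit. Unset Printing Implicit Defensive.
Local Open Scope classical_set_scope.
Local Open Scope ring_scope.

Section H.
Variable R : realType.
Lemma mul_self_ge0 (x : R) : 0 <= x * x. Proof. by rewrite -expr2 sqr_ge0. Qed.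

Lemma frobE m k (M N : 'M[R]_(m, k)) : frob M N = \sum_i \sum_j M i j * N i j.
Proof.
rewrite /frob /mxtrace exchange_big /=; apply: eq_bigr => j _.
by rewrite !mxE; apply: eq_bigr => i _; rewrite !mxE.
Qed.

Lemma frobC m k (M N : 'M[R]_(m, k)) : frob M N = frob N M.
Proof. by rewrite !frobE; apply: eq_bigr => i _; apply: eq_bigr => j _; rewrite mulrC. Qed.

Lemma frobDl m k (M N P : 'M[R]_(m, k)) : frob (M + N) P = frob M P + frob N P.
Proof. by rewrite /frob linearD /= mulmxDl mxtraceD. Qed.

Lemma frobZl m k a (M P : 'M[R]_(m, k)) : frob (a *: M) P = a * frob M P.
Proof. by rewrite /frob linearZ /= -scalemxAl mxtraceZ. Qed.

Lemma frobNl m k (M P : 'M[R]_(m, k)) : frob (- M) P = - frob M P.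
Proof. by rewrite -scaleN1r frobZl mulN1r. Qed.

Lemma frobBl m k (M N P : 'M[R]_(m, k)) : frob (M - N) P = frob M P - frob N P.
Proof. by rewrite frobDl frobNl. Qed.

Lemma frobDr m k (M N P : 'M[R]_(m, k)) : frob P (M + N) = frob P M + frob P N.
Proof. by rewrite frobC frobDl !(frobC P). Qed.
Lemma frobZr m k a (M P : 'M[R]_(m, k)) : frob P (a *: M) = a * frob P M.
Proof. by rewrite frobC frobZl frobC. Qed.
Lemma frobBr m k (M N P : 'M[R]_(m, k)) : frob P (M - N) = frob P M - frob P N.
Proof. by rewrite frobC frobBl !(frobC P). Qed.

Lemma frob_mull m k l (A : 'M[R]_(m, k)) (B : 'M[R]_(k, l)) C :
  frob (A *m B) C = frob B (A^T *m C).
Proof. by rewrite /frob trmx_mul mulmxA. Qed.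

Lemma frob_mulr m k l (A : 'M[R]_(m, k)) (B : 'M[R]_(k, l)) C :
  frob (A *m B) C = frob A (C *m B^T).
Proof. by rewrite /frob trmx_mul -mulmxA mxtrace_mulC mulmxA. Qed.

Lemma frobtr m k (M N : 'M[R]_(m, k)) : frob M^T N^T = frob M N.
Proof. by rewrite /frob trmxK mxtrace_mulC -mxtrace_tr trmx_mul trmxK. Qed.

Lemma frob_ge0 m k (M : 'M[R]_(m, k)) : 0 <= frob M M.
Proof. by rewrite frobE sumr_ge0 // => i _; rewrite sumr_ge0 // => j _; rewrite mul_self_ge0. Qed.

Lemma frob_eq0 m k (M : 'M[R]_(m, k)) : frob M M = 0 -> M = 0.
Proof.
rewrite frobE => /eqP; rewrite psumr_eq0; last first.
  by move=> i _; rewrite sumr_ge0 // => j _; rewrite mul_self_ge0.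
move=> /allP H; apply/matrixP => i j; rewrite mxE.
have := H i (mem_index_enum _); rewrite psumr_eq0; last by move=> *; rewrite mul_self_ge0.
by move=> /allP /(_ j (mem_index_enum _)); rewrite mulf_eq0 orbb => /eqP.
Qed.

Lemma fnormE m k (M : 'M[R]_(m, k)) : fnorm M = Num.sqrt (frob M M).
Proof. by rewrite /fnorm frobE; congr Num.sqrt; apply: eq_bigr => i _; apply: eq_bigr => j _; rewrite expr2. Qed.

Lemma vnormE m (x : 'cV[R]_m) : vnorm x = fnorm x.
Proof. by rewrite /vnorm /fnorm; congr Num.sqrt; apply: eq_bigr => i _; rewrite big_ord1. Qed.

Lemma fnorm_ge0 m k (M : 'M[R]_(m, k)) : 0 <= fnorm M.
Proof. by rewrite fnormE sqrtr_ge0. Qed.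

Lemma fnorm_sq m k (M : 'M[R]_(m, k)) : fnorm M ^+ 2 = frob M M.
Proof. by rewrite fnormE sqr_sqrtr // frob_ge0. Qed.

Lemma fnormtr m k (M : 'M[R]_(m, k)) : fnorm M^T = fnorm M.
Proof. by rewrite !fnormE frobtr. Qed.

Lemma CS m k (M N : 'M[R]_(m, k)) : frob M N <= fnorm M * fnorm N.
Proof.
have [a0|a0] := eqVneq (fnorm M) 0.
  have : frob M M = 0 by rewrite -fnorm_sq a0 expr0n.
  by move/frob_eq0 => ->; rewrite /frob linear0 mul0mx mxtrace0 mulr_ge0 // fnorm_ge0.
have [b0|b0] := eqVneq (fnorm N) 0.
  have : frob N N = 0 by rewrite -fnorm_sq b0 expr0n.
  by move/frob_eq0 => ->; rewrite frobC /frob linear0 mul0mx mxtrace0 mulr_ge0 // fnorm_ge0.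
have ha : 0 < fnorm M by rewrite lt0r a0 fnorm_ge0.
have hb : 0 < fnorm N by rewrite lt0r b0 fnorm_ge0.
have := frob_ge0 (fnorm N *: M - fnorm M *: N).
rewrite !(frobBl, frobBr, frobZl, frobZr) -!fnorm_sq (frobC N M).
move: (frob M N) (fnorm M) (fnorm N) ha hb => t a b ha hb H.
have hab : 0 < a * b by rewrite mulr_gt0.
rewrite -subr_ge0; rewrite -(pmulr_rge0 _ hab); nra.
Qed.

Lemma CSabs m k (M N : 'M[R]_(m, k)) : `|frob M N| <= fnorm M * fnorm N.
Proof.
rewrite ler_norml CS andbT lerNl -frobNl.
have := CS (- M) N; suff -> : fnorm (- M) = fnorm M by [].
by rewrite !fnormE frobNl frobC frobNl opprK.
Qed.


Lemma sq_le (x y : R) : 0 <= y -> x ^+ 2 <= y ^+ 2 -> x <= y.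
Proof. move=> hy h; rewrite leNgt; apply/negP => hxy; nra. Qed.

Lemma frob_rows m k (A : 'M[R]_(m, k)) : frob A A = \sum_i frob (row i A) (row i A).
Proof.
rewrite frobE; apply: eq_bigr => i _; rewrite frobE big_ord1.
by apply: eq_bigr => j _; rewrite !mxE.
Qed.

Lemma frob_cols m k (A : 'M[R]_(m, k)) : frob A A = \sum_j frob (col j A)^T (col j A)^T.
Proof.
rewrite frobE exchange_big; apply: eq_bigr => j _; rewrite frobE big_ord1.
by apply: eq_bigr => i _; rewrite !mxE.
Qed.

Lemma mul_entry m k l (A : 'M[R]_(m, k)) (B : 'M[R]_(k, l)) i j :
  (A *m B) i j = frob (row i A) (col j B)^T.
Proof. by rewrite frobE big_ord1 mxE; apply: eq_bigr => t _; rewrite !mxE. Qed.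

Lemma fnorm_mul m k l (A : 'M[R]_(m, k)) (B : 'M[R]_(k, l)) :
  fnorm (A *m B) <= fnorm A * fnorm B.
Proof.
apply: sq_le; first by rewrite mulr_ge0 // fnorm_ge0.
rewrite exprMn !fnorm_sq (frob_rows A) (frob_cols B) mulr_suml.
rewrite frobE; apply: ler_sum => i _; rewrite mulr_sumr; apply: ler_sum => j _.
rewrite mul_entry -expr2 -!fnorm_sq -exprMn -real_normK ?num_real //.
rewrite lerXn2r ?nnegrE ?mulr_ge0 ?fnorm_ge0 //; first exact: CSabs.
Qed.

Lemma fnorm_add m k (A B : 'M[R]_(m, k)) : fnorm (A + B) <= fnorm A + fnorm B.
Proof.
apply: sq_le; first by rewrite addr_ge0 // fnorm_ge0.
rewrite fnorm_sq frobDl !frobDr sqrrD -!fnorm_sq (frobC B A).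
have := CS A B; lra.
Qed.


Lemma fnormZ m k a (M : 'M[R]_(m, k)) : fnorm (a *: M) = `|a| * fnorm M.
Proof.
by rewrite !fnormE frobZl frobZr mulrA -expr2 sqrtrM ?sqr_ge0 // sqrtr_sqr.
Qed.

Lemma fnormN m k (M : 'M[R]_(m, k)) : fnorm (- M) = fnorm M.
Proof. by rewrite -scaleN1r fnormZ normrN normr1 mul1r. Qed.

Lemma fnorm0 m k : fnorm (0 : 'M[R]_(m, k)) = 0.
Proof. by rewrite fnormE /frob mulmx0 mxtrace0 sqrtr0. Qed.

Lemma fnorm_eq0 m k (M : 'M[R]_(m, k)) : fnorm M = 0 -> M = 0.
Proof. by move=> h; apply: frob_eq0; rewrite -fnorm_sq h expr0n. Qed.

Definition opset m k (M : 'M[R]_(m, k)) :=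
  [set vnorm (M *m x) | x in [set x : 'cV[R]_k | vnorm x = 1]].

Lemma opset_ub m k (M : 'M[R]_(m, k)) : has_ubound (opset M).
Proof.
exists (fnorm M) => y [x /= hx <-]; rewrite !vnormE in hx *.
by have := fnorm_mul M x; rewrite hx mulr1.
Qed.

Lemma opnorm_ge0 m k (M : 'M[R]_(m, k)) : 0 <= opnorm M.
Proof.
rewrite /opnorm -/(opset M).
case: (Classical_Prop.classic (exists x : 'cV[R]_k, vnorm x = 1)) => [[x hx]|hn].
  apply: le_trans (ub_le_sup (opset_ub M) _); last by exists x.
  by rewrite vnormE fnorm_ge0.
rewrite (_ : opset M = set0) ?sup0 //.
by apply/seteqP; split => // y [x /= hx _]; apply: hn; exists x.
Qed.

Lemma opnorm_ub m k (M : 'M[R]_(m, k)) x : vnorm (M *m x) <= opnorm M * vnorm x.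
Proof.
rewrite !vnormE.
have [->|x0] := eqVneq x 0; first by rewrite mulmx0 !fnorm0 mulr0.
have hs : 0 < fnorm x by rewrite lt0r fnorm_ge0 andbT; apply/eqP => /fnorm_eq0 /eqP; rewrite (negbTE x0).
have h1 : vnorm ((fnorm x)^-1 *: x) = 1.
  by rewrite vnormE fnormZ ger0_norm ?invr_ge0 ?fnorm_ge0 // mulVf // gt_eqF.
have := ub_le_sup (opset_ub M) (ex_intro2 _ _ _ h1 erefl).
rewrite -/(opset M) /opnorm -/(opset M) -scalemxAr vnormE fnormZ ger0_norm ?invr_ge0 ?fnorm_ge0 //.
by rewrite ler_pdivrMl // mulrC.
Qed.

Lemma opnorm_le m k (M : 'M[R]_(m, k)) c : 0 <= c ->
  (forall x, vnorm x = 1 -> vnorm (M *m x) <= c) -> opnorm M <= c.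
Proof.
move=> c0 h; rewrite /opnorm -/(opset M).
case: (Classical_Prop.classic (exists x : 'cV[R]_k, vnorm x = 1)) => [[x hx]|hn].
  by apply: ge_sup; [exists (vnorm (M *m x)); exists x | move=> y [z /= hz <-]; apply: h].
rewrite (_ : opset M = set0) ?sup0 //.
by apply/seteqP; split => // y [x /= hx _]; apply: hn; exists x.
Qed.

Lemma opnorm_tr m k (M : 'M[R]_(m, k)) y : vnorm (M^T *m y) <= opnorm M * vnorm y.
Proof.
set z := M^T *m y.
have h1 : fnorm z ^+ 2 <= fnorm y * (opnorm M * fnorm z).
  rewrite fnorm_sq {1}/z frob_mull trmxK.
  apply: le_trans (CS _ _) _; apply: ler_wpM2l; first exact: fnorm_ge0.
  by have := opnorm_ub M z; rewrite !vnormE.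
rewrite !vnormE; have := opnorm_ge0 M; have := fnorm_ge0 z; have := fnorm_ge0 y.
move: (fnorm z) (fnorm y) (opnorm M) h1 => a b c h ha hb hc.
rewrite leNgt; apply/negP => H.
have H2 : 0 < a by apply: le_lt_trans H; rewrite mulr_ge0.
have : a * (c * b) < a * a by rewrite ltr_pM2l.
rewrite expr2 in h; nra.
Qed.


Lemma frob0r m k (M : 'M[R]_(m, k)) : frob M 0 = 0.
Proof. by rewrite /frob mulmx0 mxtrace0. Qed.
Lemma frob0l m k (M : 'M[R]_(m, k)) : frob 0 M = 0.
Proof. by rewrite frobC frob0r. Qed.

Lemma frob_suml m k (I : finType) (F : I -> 'M[R]_(m, k)) P :
  frob (\sum_i F i) P = \sum_i frob (F i) P.
Proof.
apply: (big_ind2 (fun A b => frob A P = b)) => //; first exact: frob0l.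
by move=> A a B b <- <-; rewrite frobDl.
Qed.

Lemma second_order_pos n d p (Delta : 'I_n -> 'I_n -> 'M[R]_d) (S : 'I_n -> 'M[R]_(d, p)) (i : 'I_n) lam
  (v : 'rV[R]_d) :
  (d < p)%N -> (forall i, Delta i i = 0) -> second_order_critical Delta S ->
  v *m Lambda Delta S i = lam *: v -> fnorm v = 1 -> 1 <= lam.
Proof.
move=> hdp hD [hSS [hfo hso]] hv hv1.
set xr := nz_row (kermx (S i)^T).
have hk : kermx (S i)^T != 0.
  rewrite -mxrank_eq0 mxrank_ker mxrank_tr -lt0n subn_gt0.
  exact: leq_ltn_trans (rank_leq_row _) hdp.
have xr0 : xr != 0 by rewrite nz_row_eq0.
have hx : xr *m (S i)^T = 0 by apply/sub_kermxP; apply: submx_trans (nz_row_sub _) _.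
have hx' : S i *m xr^T = 0 by rewrite -[S i]trmxK -trmx_mul hx linear0.
set c := frob xr xr.
have hc : 0 < c.
  rewrite lt0r frob_ge0 andbT; apply/eqP => /frob_eq0 /eqP; by rewrite (negbTE xr0).
have hxx : xr *m xr^T = c%:M.
  rewrite [LHS]mx11_scalar /c /frob mxtrace_mulC /mxtrace big_ord1 //.
set Y := v^T *m xr.
have hYY : Y *m Y^T = c *: (v^T *m v).
  rewrite /Y trmx_mul trmxK mulmxA -(mulmxA _ xr) hxx mul_mx_scalar.
  by rewrite scalemxAl.
pose Sd := fun k : 'I_n => if k == i then Y else 0.
have ht : forall k, tangent (S k) (Sd k).
  move=> k; rewrite /tangent /Sd; case: eqP => [->|_]; last by rewrite linear0 mulmx0 mul0mx addr0.
  rewrite /Y trmx_mul trmxK mulmxA hx' mul0mx add0r -mulmxA.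
  by rewrite (_ : xr *m (S i)^T = 0) ?mulmx0.
have z1 : forall k, k != i -> Sd k = 0 by move=> k /negbTE hki; rewrite /Sd hki.
have hL : \sum_(k < n) frob (Lambda Delta S k) (Sd k *m (Sd k)^T)
    = frob (Lambda Delta S i) (Y *m Y^T).
  rewrite (bigD1 i) //= [X in _ + X]big1; last by move=> k /z1 ->; rewrite mul0mx frob0r.
  by rewrite addr0 /Sd eqxx.
have hR : \sum_(k < n) \sum_(l < n) frob (Ablk Delta k l) (Sd k *m (Sd l)^T)
    = frob (Ablk Delta i i) (Y *m Y^T).
  rewrite (bigD1 i) //= [X in _ + X]big1; last first.
    by move=> k /z1 hk0; rewrite big1 // => l _; rewrite hk0 mul0mx frob0r.
  rewrite addr0 (bigD1 i) //= [X in _ + X]big1; last by move=> k /z1 ->; rewrite linear0 mulmx0 frob0r.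
  by rewrite !addr0 /Sd eqxx.
have := hso Sd ht; rewrite hL hR.
rewrite hYY /Ablk hD addr0 !frobZr.
have e1 : frob 1%:M (v^T *m v) = 1.
  by rewrite frobC frob_mull trmxK mulmx1 -fnorm_sq hv1 expr1n.
have e2 : frob (Lambda Delta S i) (v^T *m v) = lam.
  by rewrite frobC frob_mull trmxK hv frobZr -fnorm_sq hv1 expr1n mulr1.
by rewrite e1 e2 mulr1 -{1}(mulr1 c) ler_pM2l.
Qed.


Lemma unit_mul k l (v : 'rV[R]_k) (A : 'M[R]_(k, l)) :
  A *m A^T = 1%:M -> fnorm v = 1 -> fnorm (v *m A) = 1.
Proof.
move=> hA hv; rewrite fnormE frob_mulr -mulmxA hA mulmx1 -fnorm_sq hv expr1n.
exact: sqrtr1.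
Qed.

Lemma part1_core n d p (Delta : 'I_n -> 'I_n -> 'M[R]_d) (S : 'I_n -> 'M[R]_(d, p))
  (i : 'I_n) lam (v : 'rV[R]_d) (Q : 'M[R]_(d, p)) :
  (forall i, Delta i i = 0) -> (forall i, S i *m (S i)^T = 1%:M) ->
  (forall i, \sum_(j < n) Ablk Delta i j *m S j = Lambda Delta S i *m S i) ->
  v *m Lambda Delta S i = lam *: v -> fnorm v = 1 -> 0 <= lam -> Q *m Q^T = 1%:M ->
  n%:R - 2%:R^-1 * \sum_(j < n) fnorm (S j - Q) ^+ 2
    - opnorm (\sum_(j < n | j != i) Delta i j *m S j) <= lam.
Proof.
move=> hD hSS hfo hv hv1 hl hQ.
set u := v *m S i; set q := v *m Q; set E := \sum_(j < n | j != i) Delta i j *m S j.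
have hu : fnorm u = 1 by apply: unit_mul.
have hq : fnorm q = 1 by apply: unit_mul.
have hE : \sum_j Delta i j *m S j = E by rewrite (bigD1 i) //= hD mul0mx add0r.
have key : lam *: u = \sum_j v *m S j + v *m E.
  rewrite /u scalemxAl -hv -mulmxA -hfo /Ablk mulmx_sumr.
  under eq_bigr do rewrite mulmxDl mul1mx mulmxDr.
  rewrite big_split /= -mulmx_sumr.
  congr (_ + _); rewrite -hE mulmx_sumr; apply: eq_bigr => j _; by rewrite mulmxA.
have h1 : frob (lam *: u) q <= lam.
  rewrite frobZl -{2}(mulr1 lam); apply: ler_wpM2l => //.
  by have := CS u q; rewrite hu hq mulr1.
have h2 : forall j, 1 - 2%:R^-1 * fnorm (S j - Q) ^+ 2 <= frob (v *m S j) q.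
  move=> j.
  have e : fnorm (v *m (S j - Q)) ^+ 2 = 2%:R - 2%:R * frob (v *m S j) q.
    rewrite fnorm_sq mulmxBr -/q frobBl !frobBr -!fnorm_sq unit_mul // hq (frobC q).
    rewrite expr1n; ring.
  have le : fnorm (v *m (S j - Q)) <= fnorm (S j - Q).
    by have := fnorm_mul v (S j - Q); rewrite hv1 mul1r.
  have : fnorm (v *m (S j - Q)) ^+ 2 <= fnorm (S j - Q) ^+ 2.
    by rewrite lerXn2r ?nnegrE ?fnorm_ge0.
  rewrite e; lra.
have h3 : - opnorm E <= frob (v *m E) q.
  rewrite lerNl; apply: le_trans (_ : `|frob (v *m E) q| <= _).
    by rewrite -normrN ler_norm.
  apply: le_trans (CSabs _ _) _; rewrite hq mulr1.
  rewrite (_ : fnorm (v *m E) = vnorm (E^T *m v^T)); last first.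
  rewrite vnormE -trmx_mul; exact: (esym (fnormtr _)).
  by have := opnorm_tr E v^T; rewrite !vnormE fnormtr hv1 mulr1.
apply: le_trans h1; rewrite key frobDl frob_suml.
have h4 : \sum_(j < n) (1 - 2%:R^-1 * fnorm (S j - Q) ^+ 2) <= \sum_j frob (v *m S j) q.
  by apply: ler_sum => j _; apply: h2.
rewrite sumrB sumr_const card_ord -mulr_sumr in h4.
rewrite -[n%:R]/(1 *+ n) ; lra.
Qed.


Lemma Q0_ok d p : (d <= p)%N -> (pid_mx d : 'M[R]_(d, p)) *m (pid_mx d)^T = 1%:M.
Proof.
move=> hdp; rewrite tr_pid_mx mul_pid_mx minnn (minn_idPr hdp) pid_mx_1 //.
Qed.

Lemma dF_lb n d p (S : 'I_n -> 'M[R]_(d, p)) g : (d <= p)%N ->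
  (forall Q : 'M[R]_(d, p), Q *m Q^T = 1%:M ->
     g <= Num.sqrt (\sum_(i < n) fnorm (S i - Q) ^+ 2)) -> g <= dF S.
Proof.
move=> hdp h; rewrite /dF; apply: lb_le_inf.
  by eexists; exists (pid_mx d) => //=; apply: Q0_ok.
by move=> y [Q /= hQ <-]; apply: h.
Qed.

Lemma dF_scaled n d p (S : 'I_n -> 'M[R]_(d, p)) a b t : (d <= p)%N -> 0 <= a ->
  dF S <= b ->
  (forall Q : 'M[R]_(d, p), Q *m Q^T = 1%:M ->
     t <= a * Num.sqrt (\sum_(i < n) fnorm (S i - Q) ^+ 2)) -> t <= a * b.
Proof.
move=> hdp ha hb h.
have [a0|apos] := eqVneq a 0.
  by have := h _ (Q0_ok hdp); rewrite a0 !mul0r.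
have ha' : 0 < a by rewrite lt0r apos.
have : t / a <= dF S.
  apply: dF_lb => // Q hQ; rewrite ler_pdivrMr // mulrC; exact: h.
by move=> H; have := le_trans H hb; rewrite ler_pdivrMr // mulrC.
Qed.


Lemma sq_le_lin (a c : R) : 0 <= a -> 0 <= c -> a ^+ 2 <= c * a -> a <= c.
Proof.
move=> ha hc h; rewrite leNgt; apply/negP => H.
have H2 : 0 < a by apply: le_lt_trans H.
have : a * c < a * a by rewrite ltr_pM2l.
rewrite expr2 in h; nra.
Qed.

Lemma orth_contr d p (Q : 'M[R]_(d, p)) (x : 'cV[R]_p) :
  Q *m Q^T = 1%:M -> fnorm (Q *m x) <= fnorm x.
Proof.
move=> hQ; set w := Q *m x.
have e : fnorm (Q^T *m w) = fnorm w.
  by rewrite !fnormE frob_mull trmxK mulmxA hQ mul1mx.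
apply: sq_le_lin; rewrite ?fnorm_ge0 //.
rewrite fnorm_sq {1}/w frob_mull -e; exact: CS.
Qed.

Lemma part2_core n d p (Delta : 'I_n -> 'I_n -> 'M[R]_d) (S : 'I_n -> 'M[R]_(d, p))
  (i : 'I_n) (Q : 'M[R]_(d, p)) (x : 'cV[R]_p) :
  (forall i j, Delta i j = (Delta j i)^T) -> (forall i, Delta i i = 0) ->
  Q *m Q^T = 1%:M -> vnorm x = 1 ->
  vnorm ((\sum_(j < n | j != i) Delta i j *m S j) *m x) <=
    opnorm (blockcol Delta i) * Num.sqrt (\sum_(j < n) fnorm (S j - Q) ^+ 2)
    + opnorm (\sum_(j < n) Delta i j).
Proof.
move=> hsym hD hQ hx.
have hE : \sum_(j < n | j != i) Delta i j *m S j = \sum_j Delta i j *m S j.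
  by rewrite [RHS](bigD1 i) //= hD mul0mx add0r.
set Y := \mxcol_(j < n) ((S j - Q) *m x).
have hsplit : (\sum_j Delta i j *m S j) *m x
    = (blockcol Delta i)^T *m Y + (\sum_j Delta i j) *m (Q *m x).
  rewrite /blockcol /Y tr_mxcol mul_mxrow_mxcol !mulmx_suml -big_split /=.
  apply: eq_bigr => j _; rewrite -hsym -mulmxDr mulmxBl subrK mulmxA //.
rewrite hE hsplit vnormE; apply: le_trans (fnorm_add _ _) _.
apply: lerD.
  rewrite -vnormE; apply: le_trans (opnorm_tr _ _) _.
  apply: ler_wpM2l; first exact: opnorm_ge0.
  rewrite vnormE fnormE ler_sqrt; last by apply: sumr_ge0 => j _; apply: sqr_ge0.
  rewrite /frob /Y tr_mxcol mul_mxrow_mxcol raddf_sum /=.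
  apply: ler_sum => j _; rewrite -/(frob _ _) -fnorm_sq lerXn2r ?nnegrE ?fnorm_ge0 //.
  by have := fnorm_mul (S j - Q) x; rewrite -(vnormE x) hx mulr1.
apply: le_trans (_ : _ <= opnorm (\sum_(j < n) Delta i j) * vnorm (Q *m x)) _.
  by rewrite -vnormE; exact: opnorm_ub.
rewrite -{2}(mulr1 (opnorm _)); apply: ler_wpM2l; first exact: opnorm_ge0.
by rewrite vnormE; have := orth_contr x hQ; rewrite -(vnormE x) hx.
Qed.

End H.

Local Close Scope classical_set_scope.

Theorem lemma5 (R : realType) (n d p : nat)
  (Delta : 'I_n -> 'I_n -> 'M[R]_d) (S : 'I_n -> 'M[R]_(d, p)) (delta : R) :
  (1 <= n)%N -> (1 <= d)%N -> (d < p)%N ->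
  (forall i j, Delta i j = (Delta j i)^T) ->
  (forall i, Delta i i = 0) ->
  0 < delta ->
  second_order_critical Delta S ->
  dF S <= delta * Num.sqrt (d%:R / n%:R) * opnorm (bigDelta Delta) ->
  (forall (i : 'I_n) (lam : R), eigenvalue (Lambda Delta S i) lam ->
     lam >= n%:R - delta ^+ 2 * d%:R * opnorm (bigDelta Delta) ^+ 2 / (2 * n%:R)
            - \big[Num.max/0]_(k < n)
                opnorm (\sum_(j < n | j != k) Delta k j *m S j))
  /\
  \big[Num.max/0]_(i < n) opnorm (\sum_(j < n | j != i) Delta i j *m S j)
  <= delta * Num.sqrt (d%:R / n%:R) * opnorm (bigDelta Delta)
       * \big[Num.max/0]_(i < n) opnorm (blockcol Delta i)
     + \big[Num.max/0]_(i < n) opnorm (\sum_(j < n) Delta i j).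
Proof.
move=> hn hd hdp hsym hD hdelta hSOC hdF.
have hdp' : (d <= p)%N := ltnW hdp.
have [hSS [hfo hso]] := hSOC.
set b := delta * Num.sqrt (d%:R / n%:R) * opnorm (bigDelta Delta).
have hb0 : 0 <= b by rewrite /b !mulr_ge0 ?sqrtr_ge0 ?opnorm_ge0 // ltW.
split.
  move=> i lam /eigenvalueP [v hv v0].
  have hvpos : 0 < fnorm v.
    by rewrite lt0r fnorm_ge0 andbT; apply/eqP => /fnorm_eq0 /eqP; rewrite (negbTE v0).
  set v1 := (fnorm v)^-1 *: v.
  have hv1 : v1 *m Lambda Delta S i = lam *: v1.
    by rewrite /v1 -scalemxAl hv !scalerA mulrC.
  have hn1 : fnorm v1 = 1.
    by rewrite /v1 fnormZ ger0_norm ?invr_ge0 ?fnorm_ge0 // mulVf // gt_eqF.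
  have hl1 := second_order_pos hdp hD hSOC hv1 hn1.
  set m := \big[Num.max/0]_(k < n) opnorm (\sum_(j < n | j != k) Delta k j *m S j).
  have hm : opnorm (\sum_(j < n | j != i) Delta i j *m S j) <= m.
    exact: (le_bigmax 0 (fun k => opnorm (\sum_(j < n | j != k) Delta k j *m S j)) i).
  have hc : forall Q : 'M[R]_(d, p), Q *m Q^T = 1%:M ->
      2%:R * (n%:R - m - lam) <= \sum_(j < n) fnorm (S j - Q) ^+ 2.
    move=> Q hQ.
    have := part1_core hD hSS hfo hv1 hn1 (le_trans ler01 hl1) hQ.
    lra.
  have hbsq : 2%:R * (n%:R - m - lam) <= b ^+ 2.
    set c := n%:R - m - lam.
    have [c0|c0] := lerP c 0.
      apply: le_trans (sqr_ge0 b); rewrite pmulr_rle0 //.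
    have h2c : 0 <= 2%:R * c by rewrite mulr_ge0 // ltW.
    have := @dF_scaled _ _ _ _ S 1 b (Num.sqrt (2%:R * c)) hdp' ler01 hdF.
    rewrite mul1r => H; have {}H : Num.sqrt (2%:R * c) <= b.
      apply: H => Q hQ; rewrite mul1r ler_sqrt ?hc //.
      by apply: sumr_ge0 => j _; apply: sqr_ge0.
    rewrite -(sqr_sqrtr h2c) lerXn2r ?nnegrE ?sqrtr_ge0 //.
  have hb2 : b ^+ 2 = delta ^+ 2 * d%:R * opnorm (bigDelta Delta) ^+ 2 / n%:R.
    rewrite /b !exprMn sqr_sqrtr ?divr_ge0 ?ler0n //.
    rewrite mulrA [_ * (d%:R / n%:R)]mulrC !mulrA. field.
    by rewrite pnatr_eq0 -lt0n.
  have hnz : (n%:R : R) != 0 by rewrite pnatr_eq0 -lt0n.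
  rewrite (_ : delta ^+ 2 * d%:R * opnorm (bigDelta Delta) ^+ 2 / (2 * n%:R)
     = b ^+ 2 / 2%:R); last by rewrite hb2; field; rewrite hnz.
  lra.
set M1 := \big[Num.max/0]_(i < n) opnorm (blockcol Delta i).
set M2 := \big[Num.max/0]_(i < n) opnorm (\sum_(j < n) Delta i j).
have hM1 : 0 <= M1 by apply: bigmax_ge_id.
have hM2 : 0 <= M2 by apply: bigmax_ge_id.
apply: bigmax_le; first by rewrite addr_ge0 // mulr_ge0.
move=> i _.
rewrite -lerBlDr mulrC.
apply: (dF_scaled hdp' hM1 hdF) => Q hQ.
rewrite lerBlDr.
apply: opnorm_le; first by rewrite addr_ge0 // mulr_ge0 // sqrtr_ge0.
move=> x hx.
apply: le_trans (part2_core S i hsym hD hQ hx) _.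
apply: lerD.
  apply: ler_wpM2r; first exact: sqrtr_ge0.
  exact: (le_bigmax 0 (fun k => opnorm (blockcol Delta k)) i).
exact: (le_bigmax 0 (fun k => opnorm (\sum_(j < n) Delta k j)) i).
Qed.
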